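(* Let $N\ge2$, $x_1>x_2>\cdots>x_N$ be real, $\rho=\sum_{j=1}^N\rho_j\delta_{x_j}$ with $\rho_j>0$, $\sum\rho_j=1$, and $\rho_t=e^{2tx}d\rho(x)/\int e^{2tx}d\rho(x)$. For $1\le j\le N$ let $x_1^{(j)}(t)>\cdots>x_j^{(j)}(t)$ be the zeros of the monic orthogonal polynomial $P_j(x;\rho_t)$. Then for each $j=1,\dots,N-1$ and $k=1,\dots,j$ there is a constant $C$ such that for all $t\ge0$, \[ |x_k^{(j)}(t)-x_k|\le C\,e^{-2t(x_k-x_{j+1})}. \]
   Context: $P_j(x;\rho_t)$ is the unique monic polynomial of degree $j$ orthogonal in $L^2(\rho_t)$ to all polynomials of degree less than $j$. *)

(* Defs.v *)
From HB Require Import structures.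
From mathcomp Require Import all_boot all_order all_algebra.
From mathcomp Require Import reals.
From mathcomp.analysis Require Import sequences exp.
Set Implicit Arguments. Unset Strict Implicit. Unset Printing Implicit Defensive.
Import Order.TTheory GRing.Theory Num.Theory.
Local Open Scope ring_scope.

(* Atoms are indexed 0..N-1 (paper's x_1,...,x_N is x 0, ..., x (N-1)). *)

Definition rho_t (R : realType) (N : nat) (x rho : nat -> R) (t : R) (i : nat) : R :=
  rho i * expR (2 * t * x i) / \sum_(l < N) rho l * expR (2 * t * x l).

Definition ip_t (R : realType) (N : nat) (x rho : nat -> R) (t : R)
  (p q : {poly R}) : R :=
  \sum_(i < N) rho_t N x rho t i * p.[x i] * q.[x i].

Definition monic_orth_poly (R : realType) (N : nat) (x rho : nat -> R) (t : R)
  (j : nat) (P : {poly R}) : Prop :=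
  [/\ P \is monic, size P = j.+1 &
      forall q : {poly R}, (size q <= j)%N -> ip_t N x rho t P q = 0].

(* Main.v *)
Require Import Defs.
From HB Require Import structures.
From mathcomp Require Import all_boot all_order all_algebra.
From mathcomp Require Import reals.
From mathcomp.analysis Require Import sequences exp.
From mathcomp Require Import ring lra zify.
Import Order.TTheory GRing.Theory Num.Theory.
Local Open Scope ring_scope.

Lemma prodX_size (R : realType) a b (f : nat -> R) :
  size (\prod_(a <= l < b) ('X - (f l)%:P)) = (b - a).+1.
Proof. by rewrite size_prod_XsubC size_iota. Qed.

Lemma prodX_monic (R : realType) a b (f : nat -> R) :
  \prod_(a <= l < b) ('X - (f l)%:P) \is monic.
Proof. exact: monic_prod_XsubC. Qed.

Lemma prodX_ev (R : realType) a b (f : nat -> R) y :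
  (\prod_(a <= l < b) ('X - (f l)%:P)).[y] = \prod_(a <= l < b) (y - f l).
Proof. rewrite horner_prod; apply: eq_bigr => l _; by rewrite hornerXsubC. Qed.

Lemma aux_h1 (R : realType) (t p q r : R) : 0 <= t * (p - q) -> -(2*t*(p - r)) <= -(2*t*(q - r)).
Proof. move=> h; lra. Qed.
Lemma aux_h4 (R : realType) (g C0 E : R) : 0 < g -> g / 2 < C0 * E -> 1 <= 2 * C0 * E / g.
Proof. move=> hg h; rewrite ler_pdivlMr // mul1r; lra. Qed.
Lemma aux_h5 (R : realType) (D y : R) : 0 <= D -> 1 <= y -> D <= D * y.
Proof. move=> hD hy; have : 0 <= D * (y - 1) by apply: mulr_ge0 => //; lra. lra. Qed.
Lemma aux_fin (R : realType) (A D u v : R) : A <= D -> D <= v -> 0 <= u -> A <= u + v.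
Proof. move=> *; lra. Qed.

Lemma aux_e (R : realType) (D C0 g E : R) : D * (2 * C0 / g) * E = D * ((2 * C0 * E) / g).
Proof. ring. Qed.

Lemma aux_fin2 (R : realType) (A u v : R) : A <= u -> 0 <= v -> A <= u + v.
Proof. move=> *; lra. Qed.

Lemma aux_ring (R : realType) (X r b A G : R) : X * (r * b * (A * G)) = r * (A * X * G * b).
Proof. ring. Qed.

Section Main.
Variables (R : realType) (N : nat) (x rho : nat -> R).
Hypothesis hN : (2 <= N)%N.
Hypothesis hx : forall i l : nat, (i < l < N)%N -> x l < x i.
Hypothesis hrho : forall i, (i < N)%N -> 0 < rho i.
Hypothesis hsum : \sum_(i < N) rho i = 1.
Variable j : nat.
Hypothesis hj : (0 < j < N)%N.

Lemma x_le i l : (i <= l < N)%N -> x l <= x i.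
Proof.
move=> /andP[hil hlN]; rewrite le_eqVlt; case: (ltngtP i l) hil => // [hlt|->] _.
  by rewrite hx ?orbT // hlt hlN.
by rewrite eqxx.
Qed.

Lemma x_bnd i : (i < N)%N -> x N.-1 <= x i <= x 0.
Proof. move=> hi; rewrite !x_le //; lia. Qed.

Lemma x_inj a b : (a < N)%N -> (b < N)%N -> x a = x b -> a = b.
Proof.
move=> ha hb e; case: (ltngtP a b) => // h.
  by have := hx a b; rewrite h hb e ltxx => /(_ isT).
by have := hx b a; rewrite h ha e ltxx => /(_ isT).
Qed.

Lemma sum_nat : \sum_(0 <= i < N) rho i = 1.
Proof. by rewrite big_mkord. Qed.

Definition Z t := \sum_(l < N) rho l * expR (2 * t * x l).

Lemma Z_gt0 t : 0 < Z t.
Proof.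
have hN0 : (0 < N)%N by lia.
rewrite /Z (bigD1 (Ordinal hN0)) //=.
have h1 : 0 < rho 0 * expR (2 * t * x 0) by rewrite mulr_gt0 ?expR_gt0 ?hrho.
have h2 : 0 <= \sum_(i < N | i != Ordinal hN0) rho i * expR (2 * t * x i).
  by apply: sumr_ge0 => i _; rewrite mulr_ge0 ?expR_ge0 // ltW // hrho.
lra.
Qed.

Lemma rhot_gt0 t i : (i < N)%N -> 0 < rho_t N x rho t i.
Proof. by move=> hi; rewrite /rho_t divr_gt0 ?mulr_gt0 ?expR_gt0 ?hrho //; exact: Z_gt0. Qed.


Section Fixed.
Variables (t : R) (P : {poly R}) (z : nat -> R).
Hypothesis hP : monic_orth_poly N x rho t j P.
Hypothesis hz : forall i l, (i < l < j)%N -> z l < z i.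
Hypothesis hPz : P = \prod_(i < j) ('X - (z i)%:P).

Notation w := (rho_t N x rho t).

Lemma orth (q : {poly R}) : (size q <= j)%N ->
  \sum_(0 <= i < N) w i * P.[x i] * q.[x i] = 0.
Proof. case: hP => _ _ h /h; by rewrite /ip_t big_mkord. Qed.

Lemma Pz : P = \prod_(0 <= l < j) ('X - (z l)%:P).
Proof. by rewrite big_mkord. Qed.

Lemma z_le i l : (i <= l < j)%N -> z l <= z i.
Proof.
move=> /andP[hil hlN]; rewrite le_eqVlt; case: (ltngtP i l) hil => // [hlt|->] _.
  by rewrite hz ?orbT // hlt hlN.
by rewrite eqxx.
Qed.

Lemma z_le_x m : (m < j)%N -> z m <= x m.
Proof.
move=> hm; rewrite leNgt; apply/negP => hlt.
set A := \prod_(0 <= l < m.+1) ('X - (z l)%:P).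
set Rp := \prod_(m.+1 <= l < j) ('X - (z l)%:P).
set B := \prod_(0 <= l < m) ('X - (x l)%:P).
have PAR : P = A * Rp by rewrite Pz /A /Rp -big_cat_nat //; lia.
have hsz : (size (B * Rp)%R <= j)%N.
  rewrite size_Mmonic ?monic_neq0 ?prodX_monic // !prodX_size; lia.
have H := orth (B * Rp) hsz.
have Hterm i : w i * P.[x i] * (B * Rp).[x i] = w i * (A.[x i] * B.[x i]) * (Rp.[x i])^+2.
  by rewrite PAR !hornerM; ring.
have ABle i : (i < N)%N -> A.[x i] * B.[x i] <= 0.
  move=> hi; case: (ltnP i m) => him.
    have -> : B.[x i] = 0.
      apply/eqP; rewrite /B prodX_ev prodf_seq_eq0; apply/hasP; exists i.
        by rewrite mem_index_iota.
      by rewrite subrr eqxx.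
    by rewrite mulr0.
  rewrite /A /B !prodX_ev big_nat_recr //= mulrAC -big_split /=.
  have hneg : x i - z m < 0.
    have := x_le m i; rewrite him hi /= => /(_ isT); lra.
  have hpos : 0 < \prod_(0 <= l < m) ((x i - z l) * (x i - x l)).
    rewrite big_seq; apply: prodr_gt0 => l; rewrite mem_index_iota => /andP[_ hl].
    have h1 : z m <= z l by apply: z_le; lia.
    have h2 : x i < x l by apply: hx; lia.
    have h3 : x i <= x m by apply: x_le; lia.
    nra.
  nra.
have ABlt i : (m <= i < N)%N -> A.[x i] * B.[x i] < 0.
  move=> /andP[him hi].
  rewrite /A /B !prodX_ev big_nat_recr //= mulrAC -big_split /=.
  have hneg : x i - z m < 0.
    have := x_le m i; rewrite him hi /= => /(_ isT); lra.
  have hpos : 0 < \prod_(0 <= l < m) ((x i - z l) * (x i - x l)).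
    rewrite big_seq; apply: prodr_gt0 => l; rewrite mem_index_iota => /andP[_ hl].
    have h1 : z m <= z l by apply: z_le; lia.
    have h2 : x i < x l by apply: hx; lia.
    have h3 : x i <= x m by apply: x_le; lia.
    nra.
  nra.
have allroot i : (m <= i < N)%N -> Rp.[x i] = 0.
  move=> hi; apply/eqP; apply: contraT => hne.
  move: H; rewrite (bigD1_seq i) ?mem_index_iota ?iota_uniq //=; last lia.
  have h1 : w i * P.[x i] * (B * Rp).[x i] < 0.
    rewrite Hterm.
    have a1 : 0 < w i by apply: rhot_gt0; lia.
    have a2 := ABlt i hi.
    have a3 : 0 < Rp.[x i] ^+ 2 by rewrite exprn_even_gt0 // hne orbT.
    have : w i * (A.[x i] * B.[x i]) < 0 by nra.
    nra.
  have h2 : \sum_(l <- index_iota 0 N | l != i) w l * P.[x l] * (B * Rp).[x l] <= 0.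
    rewrite big_seq_cond; apply: sumr_le0 => l /andP[]; rewrite mem_index_iota => hl _.
    rewrite Hterm.
    have a1 : 0 < w l by apply: rhot_gt0; lia.
    have a2 := ABle l ltac:(lia).
    have a3 : 0 <= Rp.[x l] ^+ 2 by rewrite sqr_ge0.
    have : w l * (A.[x l] * B.[x l]) <= 0 by nra.
    nra.
  move=> e; lra.
have Rp0 : Rp != 0 by rewrite monic_neq0 ?prodX_monic.
have := max_poly_roots (rs := [seq x i | i <- index_iota m N]) Rp0.
rewrite size_map size_iota prodX_size.
have -> : all (root Rp) [seq x i | i <- index_iota m N].
  apply/allP => y /mapP [i]; rewrite mem_index_iota => hi ->.
  by rewrite /root allroot.
have -> : uniq [seq x i | i <- index_iota m N].
  rewrite map_inj_in_uniq ?iota_uniq // => a b; rewrite !mem_index_iota => ha hb.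
  apply: x_inj; lia.
move=> /(_ isT isT); lia.
Qed.

Lemma z_ge m : (m < j)%N -> x N.-1 <= z m.
Proof.
move=> hm.
suff h : x N.-1 <= z j.-1.
  apply: le_trans h _; apply: z_le; lia.
rewrite leNgt; apply/negP => hlt.
set Rp := \prod_(0 <= l < j.-1) ('X - (z l)%:P).
have PR : P = Rp * ('X - (z j.-1)%:P).
  rewrite Pz /Rp; case: (j) hj => // j' _; by rewrite big_nat_recr.
have hsz : (size Rp <= j)%N by rewrite prodX_size; lia.
have H := orth Rp hsz.
have Hterm i : w i * P.[x i] * Rp.[x i] = w i * (x i - z j.-1) * (Rp.[x i])^+2.
  by rewrite PR !hornerM hornerXsubC; ring.
have allroot i : (0 <= i < N)%N -> Rp.[x i] = 0.
  move=> hi; apply/eqP; apply: contraT => hne.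
  move: H; rewrite (bigD1_seq i) ?mem_index_iota ?iota_uniq //=.
  have h1 : 0 < w i * P.[x i] * Rp.[x i].
    rewrite Hterm.
    have a1 : 0 < w i by apply: rhot_gt0; lia.
    have a2 : 0 < x i - z j.-1.
      have := x_le i N.-1; move=> /(_ ltac:(lia)); lra.
    have a3 : 0 < Rp.[x i] ^+ 2 by rewrite exprn_even_gt0 // hne orbT.
    have : 0 < w i * (x i - z j.-1) by nra.
    nra.
  have h2 : 0 <= \sum_(l <- index_iota 0 N | l != i) w l * P.[x l] * Rp.[x l].
    rewrite big_seq_cond; apply: sumr_ge0 => l /andP[]; rewrite mem_index_iota => hl _.
    rewrite Hterm.
    have a1 : 0 < w l by apply: rhot_gt0; lia.
    have a2 : 0 < x l - z j.-1.
      have := x_le l N.-1; move=> /(_ ltac:(lia)); lra.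
    have a3 : 0 <= Rp.[x l] ^+ 2 by rewrite sqr_ge0.
    have : 0 <= w l * (x l - z j.-1) by nra.
    nra.
  move=> e; lra.
have Rp0 : Rp != 0 by rewrite monic_neq0 ?prodX_monic.
have := max_poly_roots (rs := [seq x i | i <- index_iota 0 N]) Rp0.
rewrite size_map size_iota prodX_size.
have -> : all (root Rp) [seq x i | i <- index_iota 0 N].
  apply/allP => y /mapP [i]; rewrite mem_index_iota => hi ->.
  by rewrite /root allroot.
have -> : uniq [seq x i | i <- index_iota 0 N].
  rewrite map_inj_in_uniq ?iota_uniq // => a b; rewrite !mem_index_iota => ha hb.
  apply: x_inj; lia.
move=> /(_ isT isT); lia.
Qed.

Definition D := x 0 - x N.-1.

Lemma zx_bnd i l : (i < N)%N -> (l < j)%N -> `|x i - z l| <= D.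
Proof.
move=> hi hl; have := x_bnd i hi; have := z_ge l hl; have := z_le_x l hl.
have := x_bnd l ltac:(lia); rewrite /D ler_norml; lra.
Qed.

Lemma xx_bnd i l : (i < N)%N -> (l < N)%N -> `|x i - x l| <= D.
Proof.
move=> hi hl; have := x_bnd i hi; have := x_bnd l hl; rewrite /D ler_norml; lra.
Qed.

Lemma P_bnd i : (i < N)%N -> `|P.[x i]| <= D ^+ j.
Proof.
move=> hi; rewrite Pz prodX_ev normr_prod -(subn0 j) -prodr_const_nat subn0.
rewrite big_seq [X in _ <= X]big_seq; apply: ler_prod => l; rewrite mem_index_iota => hl.
by rewrite normr_ge0 zx_bnd //; lia.
Qed.

Lemma prodx_bnd a b i : (b <= N)%N -> (i < N)%N ->
  `|\prod_(a <= l < b) (x i - x l)| <= D ^+ (b - a).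
Proof.
move=> hb hi; rewrite normr_prod -prodr_const_nat.
rewrite big_seq [X in _ <= X]big_seq; apply: ler_prod => l; rewrite mem_index_iota => hl.
by rewrite normr_ge0 xx_bnd //; lia.
Qed.

Definition qk k := \prod_(0 <= l < k) ('X - (x l)%:P) * \prod_(k.+1 <= l < j) ('X - (x l)%:P).

Lemma qk_ev k y : (qk k).[y] = \prod_(0 <= l < k) (y - x l) * \prod_(k.+1 <= l < j) (y - x l).
Proof. by rewrite /qk hornerM !prodX_ev. Qed.

Lemma qk_size k : (k < j)%N -> (size (qk k) <= j)%N.
Proof. move=> hk; rewrite /qk size_Mmonic ?monic_neq0 ?prodX_monic // !prodX_size; lia. Qed.

Lemma qk_zero k i : (i < j)%N -> i != k -> (qk k).[x i] = 0.
Proof.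
move=> hi hik; rewrite qk_ev; apply/eqP; rewrite mulf_eq0 !prodf_seq_eq0.
case: (ltngtP i k) hik => // h _.
  apply/orP; left; apply/hasP; exists i; first by rewrite mem_index_iota.
  by rewrite subrr eqxx.
apply/orP; right; apply/hasP; exists i; first by rewrite mem_index_iota; lia.
by rewrite subrr eqxx.
Qed.

Lemma qk_bnd k i : (k < j)%N -> (i < N)%N -> `|(qk k).[x i]| <= D ^+ k * D ^+ (j - k.+1).
Proof.
move=> hk hi; rewrite qk_ev normrM; apply: ler_pM; rewrite ?normr_ge0 //.
  by rewrite -{2}(subn0 k); apply: prodx_bnd => //; lia.
by apply: prodx_bnd => //; lia.
Qed.

Lemma cbound k : (k < j)%N -> 0 <= t ->
  rho k * expR (2 * t * x k) * (`|P.[x k]| * `|(qk k).[x k]|) <=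
  expR (2 * t * x j) * (D ^+ j * (D ^+ k * D ^+ (j - k.+1))).
Proof.
move=> hk ht.
set c := D ^+ j * (D ^+ k * D ^+ (j - k.+1)).
have hD : 0 <= D by rewrite /D; have := x_bnd 0 ltac:(lia); lra.
have hc : 0 <= c by rewrite /c !mulr_ge0 ?exprn_ge0.
have H := orth (qk k) (qk_size k hk).
rewrite (bigD1_seq k) ?mem_index_iota ?iota_uniq //= in H; last lia.
set rest := \sum_(l <- index_iota 0 N | l != k) _ in H.
have e1 : w k * P.[x k] * (qk k).[x k] = - rest by lra.
have hZ := Z_gt0 t.
have bnd_l l : (l < N)%N -> l != k ->
    `|w l * P.[x l] * (qk k).[x l]| <= rho l * (expR (2 * t * x j) / Z t * c).
  move=> hl hlk; case: (ltnP l j) => hlj.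
    rewrite qk_zero // mulr0 normr0; apply: mulr_ge0; first by rewrite ltW // hrho.
    by rewrite mulr_ge0 // divr_ge0 ?expR_ge0 // ltW.
  have E : `|w l * P.[x l] * (qk k).[x l]| =
      rho l * (expR (2 * t * x l) / Z t * (`|P.[x l]| * `|(qk k).[x l]|)).
    by rewrite -mulrA normrM (ger0_norm (ltW (rhot_gt0 t l hl))) normrM /rho_t -/(Z t) !mulrA.
  rewrite E ler_pM2l ?hrho //; apply: ler_pM.
  - by rewrite divr_ge0 ?expR_ge0 ?(ltW hZ).
  - by rewrite mulr_ge0 ?normr_ge0.
  - rewrite ler_pM2r ?invr_gt0 // ler_expR.
    have := x_le j l ltac:(lia); nra.
  - by apply: ler_pM; rewrite ?normr_ge0 ?P_bnd ?qk_bnd //; lia.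
have key : `|w k * P.[x k] * (qk k).[x k]| <= expR (2 * t * x j) / Z t * c.
  rewrite e1 normrN; apply: le_trans (ler_norm_sum _ _ _) _.
  have S1 : \sum_(l <- index_iota 0 N | l != k) `|w l * P.[x l] * (qk k).[x l]| <=
      \sum_(l <- index_iota 0 N | l != k) rho l * (expR (2 * t * x j) / Z t * c).
    rewrite big_seq_cond [X in _ <= X]big_seq_cond; apply: ler_sum => l /andP[].
    rewrite mem_index_iota => hl hlk; apply: bnd_l => //; lia.
  apply: le_trans S1 _.
  rewrite -mulr_suml.
  have hs : \sum_(l <- index_iota 0 N | l != k) rho l <= 1.
    rewrite -sum_nat (bigD1_seq k (r := index_iota 0 N)) ?mem_index_iota ?iota_uniq //=; last lia.
    have := hrho k ltac:(lia); lra.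
  have : 0 <= expR (2 * t * x j) / Z t * c by rewrite mulr_ge0 ?divr_ge0 ?expR_ge0 ?(ltW hZ).
  nra.
move: key; rewrite -mulrA normrM (ger0_norm (ltW (rhot_gt0 t k ltac:(lia)))) normrM /rho_t -/(Z t).
rewrite !(mulrAC _ (Z t)^-1) ler_pM2r ?invr_gt0 //.
Qed.

Lemma Plow k g : (k < j)%N -> 0 < g ->
  (forall l, (l < k)%N -> x k + g <= x l) ->
  (forall l, (k < l < N)%N -> x l + g <= x k) ->
  (forall l, (l < k)%N -> `|z l - x l| <= g / 2) ->
  (g / 2) ^+ k * `|x k - z k| * g ^+ (j - k.+1) <= `|P.[x k]|.
Proof.
move=> hk hg hlo hhi hgood.
rewrite Pz prodX_ev (big_cat_nat (n:=k)) //=; last exact: ltnW.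
rewrite (big_ltn hk) normrM normrM mulrA.
have e1 : (g / 2) ^+ k = \prod_(0 <= l < k) (g / 2) by rewrite prodr_const_nat subn0.
have e2 : g ^+ (j - k.+1) = \prod_(k.+1 <= l < j) g by rewrite prodr_const_nat.
apply: ler_pM.
- by rewrite mulr_ge0 ?exprn_ge0 ?normr_ge0 // divr_ge0 // ltW.
- by rewrite exprn_ge0 // ltW.
- apply: ler_pM; rewrite ?exprn_ge0 ?normr_ge0 ?divr_ge0 ?(ltW hg) //.
  rewrite e1 normr_prod big_seq [X in _ <= X]big_seq; apply: ler_prod => l.
  rewrite mem_index_iota => /andP[_ hl].
  have := hlo l hl; have := hgood l hl; rewrite ler_norml => /andP[a b] c.
  rewrite divr_ge0 ?(ltW hg) //= ler_normr; apply/orP; right; lra.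
- rewrite e2 normr_prod big_seq [X in _ <= X]big_seq; apply: ler_prod => l.
  rewrite mem_index_iota => /andP[hl1 hl2].
  have := hhi l ltac:(lia); have := z_le_x l hl2 => a b.
  rewrite (ltW hg) /= ler_normr; apply/orP; left; lra.
Qed.

Lemma qk_low k g : (k < j)%N -> 0 < g ->
  (forall l, (l < k)%N -> x k + g <= x l) ->
  (forall l, (k < l < N)%N -> x l + g <= x k) ->
  g ^+ k * g ^+ (j - k.+1) <= `|(qk k).[x k]|.
Proof.
move=> hk hg hlo hhi.
have e1 : g ^+ k = \prod_(0 <= l < k) g by rewrite prodr_const_nat subn0.
have e2 : g ^+ (j - k.+1) = \prod_(k.+1 <= l < j) g by rewrite prodr_const_nat.
rewrite qk_ev normrM; apply: ler_pM; rewrite ?exprn_ge0 ?(ltW hg) //.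
  rewrite e1 normr_prod big_seq [X in _ <= X]big_seq; apply: ler_prod => l.
  rewrite mem_index_iota => /andP[_ hl]; have := hlo l hl => a.
  rewrite (ltW hg) /= ler_normr; apply/orP; right; lra.
rewrite e2 normr_prod big_seq [X in _ <= X]big_seq; apply: ler_prod => l.
rewrite mem_index_iota => /andP[hl1 hl2]; have := hhi l ltac:(lia) => a.
rewrite (ltW hg) /= ler_normr; apply/orP; left; lra.
Qed.

Lemma core k g (C0 : R) : (k < j)%N -> 0 <= t -> 0 < g ->
  (forall l, (l < k)%N -> x k + g <= x l) ->
  (forall l, (k < l < N)%N -> x l + g <= x k) ->
  0 <= C0 ->
  (forall l, (l < k)%N -> `|z l - x l| <= C0 * expR (- (2 * t * (x l - x j)))) ->
  `|z k - x k| <=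
    (D ^+ j * (D ^+ k * D ^+ (j - k.+1)) /
       (rho k * (g ^+ k * g ^+ (j - k.+1)) * ((g / 2) ^+ k * g ^+ (j - k.+1)))
     + D * (2 * C0 / g)) * expR (- (2 * t * (x k - x j))).
Proof.
move=> hk ht hg hlo hhi hC0 IH.
set E := expR (- (2 * t * (x k - x j))).
set c := D ^+ j * (D ^+ k * D ^+ (j - k.+1)).
have hD : 0 <= D by rewrite /D; have := x_bnd 0 ltac:(lia); lra.
have hc : 0 <= c by rewrite /c !mulr_ge0 ?exprn_ge0.
have hE : 0 < E by rewrite expR_gt0.
have hr : 0 < rho k by apply: hrho; lia.
set a := (g / 2) ^+ k * g ^+ (j - k.+1).
set b := g ^+ k * g ^+ (j - k.+1).
have ha : 0 < a by rewrite /a mulr_gt0 ?exprn_gt0 ?divr_gt0.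
have hb : 0 < b by rewrite /b mulr_gt0 ?exprn_gt0.
have hCg : 0 <= c / (rho k * b * a) by apply: divr_ge0 => //; rewrite ltW // mulr_gt0 // mulr_gt0.
have hCb : 0 <= D * (2 * C0 / g) by rewrite mulr_ge0 // divr_ge0 ?mulr_ge0 // ltW.
case: (boolP (has (fun l => g / 2 < `|z l - x l|) (index_iota 0 k))).
  move=> /hasP [l]; rewrite mem_index_iota => /andP[_ hl] hlt.
  have h1 : C0 * expR (- (2 * t * (x l - x j))) <= C0 * E.
    apply: ler_wpM2l => //; rewrite ler_expR; apply: aux_h1.
    by apply: mulr_ge0 => //; rewrite subr_ge0; apply: le_trans (hlo l hl); rewrite lerDl ltW.
  have h2 : g / 2 < C0 * E by apply: lt_le_trans hlt (le_trans (IH l hl) h1).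
  have hkN : (k < N)%N by apply: ltn_trans hk _; case/andP: hj.
  have h3 : `|z k - x k| <= D by rewrite distrC; exact: zx_bnd.
  have e : D * (2 * C0 / g) * E = D * ((2 * C0 * E) / g) by apply: aux_e.
  have h4 : 1 <= (2 * C0 * E) / g by apply: aux_h4.
  have h5 : D <= D * ((2 * C0 * E) / g) by apply: aux_h5.
  have h6 : 0 <= c / (rho k * b * a) * E by rewrite mulr_ge0 // ltW.
  rewrite mulrDl e; exact: aux_fin h3 h5 h6.
move=> /hasPn hgood.
have hgood' l : (l < k)%N -> `|z l - x l| <= g / 2.
  move=> hl; have := hgood l; rewrite mem_index_iota hl /= => /(_ isT).
  by rewrite -leNgt.
have HP := @Plow k g hk hg hlo hhi hgood'.
have Hq := @qk_low k g hk hg hlo hhi.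
have Hc := @cbound k hk ht.
have ej : expR (2 * t * x j) = expR (2 * t * x k) * E.
  by rewrite -expRD; congr expR; ring.
rewrite ej -/c in Hc.
have ek := expR_gt0 (2 * t * x k).
have Hc' : rho k * (`|P.[x k]| * `|(qk k).[x k]|) <= E * c.
  have e1 : rho k * expR (2 * t * x k) * (`|P.[x k]| * `|(qk k).[x k]|) =
    expR (2 * t * x k) * (rho k * (`|P.[x k]| * `|(qk k).[x k]|)) by ring.
  by move: Hc; rewrite e1 -[X in _ <= X]mulrA ler_pM2l.
have Hm : rho k * ((g / 2) ^+ k * `|x k - z k| * g ^+ (j - k.+1) * b) <=
    rho k * (`|P.[x k]| * `|(qk k).[x k]|).
  rewrite ler_pM2l //; apply: ler_pM.
  - by rewrite !mulr_ge0 ?exprn_ge0 ?normr_ge0 ?divr_ge0 ?(ltW hg).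
  - by rewrite ltW.
  - exact: HP.
  - exact: Hq.
rewrite mulrDl.
have h6 : 0 <= D * (2 * C0 / g) * E by rewrite mulr_ge0 // ltW.
apply: aux_fin2 _ h6.
rewrite distrC.
have hden : 0 < rho k * b * a by rewrite mulr_gt0 // mulr_gt0.
rewrite mulrAC ler_pdivlMr // /a aux_ring [c * E]mulrC.
exact: le_trans Hm Hc'.
Qed.

End Fixed.

Lemma gapk k : (k.+1 < N)%N -> exists2 g, 0 < g &
  (forall l, (l < k)%N -> x k + g <= x l) /\ (forall l, (k < l < N)%N -> x l + g <= x k).
Proof.
case: k => [|k] hk.
  exists (x 0 - x 1); first by have := hx 0 1 ltac:(lia); lra.
  split => // l hl; have := x_le 1 l ltac:(lia); lra.
exists (Order.min (x k - x k.+1) (x k.+1 - x k.+2)).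
  rewrite lt_min; have := hx k k.+1 ltac:(lia); have := hx k.+1 k.+2 ltac:(lia).
  move=> a b; apply/andP; split; lra.
have m1 : Order.min (x k - x k.+1) (x k.+1 - x k.+2) <= x k - x k.+1 by rewrite ge_min lexx.
have m2 : Order.min (x k - x k.+1) (x k.+1 - x k.+2) <= x k.+1 - x k.+2 by rewrite ge_min lexx orbT.
split => l hl.
  have := x_le l k ltac:(lia); lra.
have := x_le k.+2 l ltac:(lia); lra.
Qed.
Lemma main_ind k : (k <= j)%N -> exists C : R, 0 <= C /\
  forall m, (m < k)%N -> forall t : R, 0 <= t ->
    forall (P : {poly R}) (z : nat -> R),
      monic_orth_poly N x rho t j P ->
      (forall i l : nat, (i < l < j)%N -> z l < z i) ->
      P = \prod_(i < j) ('X - (z i)%:P) ->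
      `|z m - x m| <= C * expR (- (2 * t * (x m - x j))).
Proof.
elim: k => [|k IH] hk.
  by exists 0; split => // m.
have [C0 [hC0 IH0]] := IH (ltnW hk).
have hkN : (k.+1 < N)%N by case/andP: hj => _ h; apply: leq_ltn_trans hk h.
have [g hg [hlo hhi]] := gapk k hkN.
set c := D ^+ j * (D ^+ k * D ^+ (j - k.+1)).
set Cg := c / (rho k * (g ^+ k * g ^+ (j - k.+1)) * ((g / 2) ^+ k * g ^+ (j - k.+1))).
set Cb := D * (2 * C0 / g).
have hD : 0 <= D by rewrite /D; have := x_bnd 0 ltac:(lia); lra.
have hr : 0 < rho k by apply: hrho; apply: ltn_trans hkN.
have hCg : 0 <= Cg.
  apply: divr_ge0; first by rewrite /c !mulr_ge0 ?exprn_ge0.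
  by rewrite ltW // !mulr_gt0 ?exprn_gt0 ?divr_gt0.
have hCb : 0 <= Cb by rewrite /Cb mulr_ge0 // divr_ge0 ?mulr_ge0 // ltW.
exists (C0 + (Cg + Cb)); split; first by rewrite addr_ge0 // addr_ge0.
move=> m hm t ht P z hP hz hPz.
have hE : 0 <= expR (- (2 * t * (x m - x j))) by rewrite expR_ge0.
case: (ltnP m k) => hmk.
  apply: le_trans (IH0 m hmk t ht P z hP hz hPz) _.
  by apply: ler_wpM2r => //; rewrite lerDl addr_ge0.
have -> : m = k by apply/eqP; rewrite eqn_leq hmk -ltnS hm.
apply: le_trans (core t P z hP hz hPz k g C0 hk ht hg hlo hhi hC0 _) _.
  move=> l hl; exact: (IH0 l hl t ht P z hP hz hPz).
apply: ler_wpM2r; first exact: expR_ge0.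
by rewrite -/c -/Cg -/Cb lerDr.
Qed.

End Main.

Theorem theorem2p5 (R : realType) (N : nat) (x rho : nat -> R) :
  (2 <= N)%N ->
  (forall i l : nat, (i < l < N)%N -> x l < x i) ->
  (forall i : nat, (i < N)%N -> 0 < rho i) ->
  \sum_(i < N) rho i = 1 ->
  forall j : nat, (0 < j < N)%N ->
  forall k : nat, (k < j)%N ->
  exists C : R, forall t : R, 0 <= t ->
    forall (P : {poly R}) (z : nat -> R),
      monic_orth_poly N x rho t j P ->
      (forall i l : nat, (i < l < j)%N -> z l < z i) ->
      P = \prod_(i < j) ('X - (z i)%:P) ->
      `|z k - x k| <= C * expR (- (2 * t * (x k - x j))).
Proof.
move=> hN hx hrho hsum j hj k hk.
have [C [_ HC]] := @main_ind R N x rho hN hx hrho hsum j hj j (leqnn j).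
exists C => t ht P z hP hz hPz; exact: (HC k hk t ht P z hP hz hPz).
Qed.
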